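(* Let $y=\gamma+i\tau$ with $\tau\in\mathbb{R}$ and $\gamma>-1/2$. For every compact set $K\subset\mathbb{C}$ there is a constant $C_K>0$ such that for all $a\in K$, $n\in\mathbb{N}$ and $m\in\{0,1,\dots,n\}$, \[ \bigl|{}_2F_1(-m,1+y;2\gamma+1;1-e^{ia/n})\bigr|\le {}_2F_1(-n,1+|y|;2\gamma+1;-C_K/n). \]
   Context: ${}_2F_1(\alpha,\beta;c;z)=\sum_{k\ge0}\frac{(\alpha)_k(\beta)_k}{(c)_k}\frac{z^k}{k!}$ is the Gauss hypergeometric function, where $(v)_0=1$, $(v)_k=v(v+1)\cdots(v+k-1)$; when $\alpha=-m$ is a nonpositive integer it is the polynomial $\sum_{k=0}^m\binom{m}{k}\frac{(\beta)_k}{(c)_k}(-z)^k$. *)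

(* Defs.v *)
From HB Require Import structures.
From mathcomp Require Import all_boot all_order all_algebra.
From mathcomp Require Import all_classical all_reals all_analysis.
From mathcomp Require Import complex.
Set Implicit Arguments. Unset Strict Implicit. Unset Printing Implicit Defensive.
Import Order.TTheory GRing.Theory Num.Theory.
Import numFieldNormedType.Exports.
Local Open Scope ring_scope.

Definition pochhammer {F : pzRingType} (v : F) (k : nat) : F :=
  \prod_(i < k) (v + i%:R).

(* Terminating Gauss hypergeometric function 2F1(-m, b; c; z)
   = sum_{k=0}^m binom(m,k) (b)_k/(c)_k (-z)^k. *)
Definition hyp2F1_neg {F : fieldType} (m : nat) (b c z : F) : F :=
  \sum_(k < m.+1) ('C(m, k))%:R * (pochhammer b k / pochhammer c k) * (- z) ^+ k.

Definition cexp {R : realType} (z : R[i]) : R[i] :=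
  let: Complex x t := z in
  ((expR x * cos t) +i* (expR x * sin t))%C.

(* Standard topology on C = R[i]: the one induced by the complex modulus
   (mathcomp-analysis gives every numFieldType this normed-module structure;
   we make it canonical on the concrete type R[i]). *)
HB.instance Definition _ (R : rcfType) :=
  NormedModule.copy R[i] (R[i] : numFieldType)^o.

(* Main.v *)
Require Import Defs.
From HB Require Import structures.
From mathcomp Require Import all_boot all_order all_algebra.
From mathcomp Require Import all_classical all_reals all_analysis.
From mathcomp Require Import complex ring lra.
Import Order.TTheory GRing.Theory Num.Theory.
Import numFieldNormedType.Exports.
Local Open Scope ring_scope.
Local Open Scope complex_scope.

Lemma hyp_bound (F : numFieldType) (m n : nat) (b bb c z t : F) :
 (m <= n)%N -> 0 < c -> 0 <= bb -> (forall i : nat, `|b + i%:R| <= bb + i%:R) -> `|z| <= t ->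
 `|hyp2F1_neg m b c z| <= hyp2F1_neg n bb c (- t).
Proof.
move=> mn c0 bb0 hb zt.
have t0 : 0 <= t by apply: le_trans zt.
have Pc k : 0 < pochhammer c k.
  by apply: prodr_gt0 => i _; apply: ltr_wpDr.
have Pbb k : 0 <= pochhammer bb k.
  by apply: prodr_ge0 => i _; apply: addr_ge0.
rewrite /hyp2F1_neg opprK.
apply: le_trans (ler_norm_sum _ _ _) _.
rewrite (big_ord_widen n.+1 (fun k => `| ('C(m, k))%:R * (pochhammer b k / pochhammer c k) * (- z) ^+ k |)) //.
rewrite [X in _ <= X](bigID (fun i : 'I_n.+1 => (i < m.+1)%N)) /=.
rewrite -[X in X <= _]addr0; apply: lerD; last first.
  apply: sumr_ge0 => i _; apply: mulr_ge0; last exact: exprn_ge0.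
  apply: mulr_ge0; first exact: ler0n.
  by apply: divr_ge0 => //; apply: ltW.
apply: ler_sum => i _.
rewrite normrM normrX normrN normrM normr_nat normf_div (gtr0_norm (Pc i)).
apply: ler_pM.
- by apply: mulr_ge0; [exact: ler0n | apply: divr_ge0 => //; apply: ltW].
- exact: exprn_ge0.
- apply: ler_pM.
  + exact: ler0n.
  + by apply: divr_ge0 => //; apply: ltW.
  + by rewrite ler_nat leq_bin2l.
  rewrite ler_pM2r ?invr_gt0 //.
  rewrite /pochhammer normr_prod; apply: ler_prod => j _.
  by rewrite normr_ge0 hb.
by apply: lerXn2r; rewrite // nnegrE.
Qed.

Local Open Scope classical_set_scope.
Lemma compact_norm_bound (R : realType) (K : set R[i]) : compact K ->
  exists B : R, 0 <= B /\ forall a, K a -> `|a| <= B%:C.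
Proof.
rewrite compact_cover => Kco.
have covK : K `<=` \bigcup_(n : nat) ball (0 : R[i]) (n%:R).
  move=> p _; exists (Num.truncn (complex.Re `|p|)).+1 => //=.
  rewrite -ball_normE /= sub0r normrN.
  have -> : `|p| = (Normc.normc p)%:C by [].
  by rewrite -(rmorph_nat (real_complex R)) ltcR truncnS_gt.
have /Kco [] := covK.
  by move=> n _; apply: ball_open.
move=> D _ DcovK.
exists (\max_(i <- finmap.enum_fset D) i)%:R; split => // a /DcovK [n Dn].
rewrite -ball_normE /= sub0r normrN.
move=> h; apply: ltW; apply: (lt_le_trans h).
rewrite -(rmorph_nat (real_complex R)) lecR ler_nat.
by apply: (@leq_bigmax_seq _ _ xpredT (fun i => i)).
Qed.

Local Close Scope classical_set_scope.

Lemma abs_sin_le (R : realType) (t : R) : `|sin t| <= `|t|.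
Proof.
wlog t0 : t / 0 <= t.
  move=> H; case: (leP 0 t) => [|/ltW]; first exact: H.
  by rewrite -oppr_ge0 => /H; rewrite sinN !normrN.
have [|c _ h] := @MVT_segment R sin cos 0 t t0 (fun x _ => is_derive_sin x).
  by apply/continuous_subspaceT => ?; exact: continuous_sin.
rewrite sin0 !subr0 in h; rewrite h normrM ler_piMl //; exact: cos_max.
Qed.

Lemma one_sub_cos (R : realType) (t : R) : 1 - cos t <= t ^+ 2.
Proof.
wlog t0 : t / 0 <= t.
  move=> H; case: (leP 0 t) => [|/ltW]; first exact: H.
  by rewrite -oppr_ge0 => /H; rewrite cosN sqrrN.
have [|c /andP[c0 ct] h] := @MVT_segment R cos (fun x => - sin x) 0 t t0 (fun x _ => is_derive_cos x).
  by apply/continuous_subspaceT => ?; exact: continuous_cos.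
rewrite cos0 subr0 in h.
have -> : 1 - cos t = sin c * t by rewrite -opprB h mulNr opprK.
apply: (le_trans (ler_norm _)); rewrite normrM expr2 (ger0_norm t0).
apply: ler_wpM2r => //.
move: c0 ct; rewrite !bnd_simp => c0 ct.
by apply: le_trans (abs_sin_le _ c) _; rewrite ger0_norm.
Qed.

Lemma expm1_bound {R : realType} {x B : R} : 0 <= B -> `|x| <= B ->
  (expR x - 1) ^+ 2 <= x ^+ 2 * expR B ^+ 2.
Proof.
move=> B0 xB.
have h1 := expR_ge1Dx x.
have h2 := expR_ge1Dx (- x); rewrite expRN in h2.
have E0 := expR_gt0 x.
have h2' : expR x * (1 - x) <= 1.
  by rewrite mulrC -ler_pdivlMr // div1r.
have hF : 1 + B <= expR B := expR_ge1Dx B.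
have xB' : x <= B by apply: le_trans (ler_norm x) xB.
have EF : expR x <= expR B by rewrite ler_expR.
case: (leP 0 x) => x0.
  have : 0 <= expR x - 1 <= x * expR B by apply/andP; split; nra.
  case/andP => a b.
  rewrite -exprMn; apply: lerXn2r => //; rewrite nnegrE //; nra.
have : 0 <= 1 - expR x <= - x * expR B by apply/andP; split; nra.
case/andP => a b.
rewrite -sqrrN opprB -[x ^+ 2]sqrrN -exprMn; apply: lerXn2r => //; rewrite nnegrE //; nra.
Qed.

Lemma cexp_bound (R : realType) (B : R) (w : R[i]) : 0 <= B -> `|w| <= B%:C ->
  `|1 - cexp w| <= (2 * expR B)%:C * `|w|.
Proof.
case: w => x t B0; rewrite !normc_def /= lecR => hw.
rewrite -rmorphM lecR.
have F0 := expR_gt0 B.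
have hF : 1 + B <= expR B := expR_ge1Dx B.
have E0 := expR_gt0 x.
have s0 : 0 <= x ^+ 2 + t ^+ 2 by rewrite addr_ge0 // sqr_ge0.
have hw2 : x ^+ 2 + t ^+ 2 <= B ^+ 2.
  rewrite -(sqr_sqrtr s0); apply: lerXn2r => //; rewrite nnegrE ?sqrtr_ge0 //.
have xB : `|x| <= B by rewrite ler_norml; apply/andP; split; nra.
have xB' : x <= B by apply: le_trans (ler_norm x) xB.
have EF : expR x <= expR B by rewrite ler_expR.
have h1 := expm1_bound B0 xB.
have h2 := one_sub_cos _ t.
have h3 := cos2Dsin2 t.
have c1 := cos_le1 t.
have h4 : expR x * (1 - cos t) <= expR B * t ^+ 2.
  apply: ler_pM; [exact: ltW | by rewrite subr_ge0 | exact: EF | exact: h2].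
have F2 : 0 <= 2 * expR B by rewrite mulr_ge0 // ltW.
rewrite -[2 * expR B]ger0_norm // -sqrtr_sqr -sqrtrM ?sqr_ge0 //.
rewrite ler_sqrt; last by rewrite mulr_ge0 // sqr_ge0.
have e : (1 - expR x * cos t) ^+ 2 + (0 - expR x * sin t) ^+ 2 =
  (expR x - 1) ^+ 2 + 2 * (expR x * (1 - cos t)) +
  expR x ^+ 2 * (cos t ^+ 2 + sin t ^+ 2 - 1) by ring.
rewrite e h3 subrr mulr0 addr0.
apply: le_trans (lerD h1 (ler_wpM2l _ h4)) _ => //.
have x2 : 0 <= x ^+ 2 by rewrite sqr_ge0.
have t2 : 0 <= t ^+ 2 by rewrite sqr_ge0.
nra.
Qed.


Theorem lemma2p2 (R : realType) (gamma tau : R) (hgamma : - (1 / 2) < gamma)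
  (K : set R[i]) (hK : compact K) :
  let y : R[i] := gamma +i* tau in
  exists CK : R, 0 < CK /\
    forall a : R[i], K a -> forall n m : nat, (m <= n)%N ->
      `| hyp2F1_neg m (1 + y) (2 * gamma + 1)%:C
           (1 - cexp ('i%C * a / n%:R)) |
      <= hyp2F1_neg n (1 + `|y|) (2 * gamma + 1)%:C (- (CK%:C / n%:R)).
Proof.
move=> y.
have [B [B0 hB]] := compact_norm_bound _ _ hK.
have F0 := expR_gt0 B.
exists (2 * expR B * B + 1); split.
  by apply: ltr_wpDl => //; rewrite !mulr_ge0 // ltW.
move=> a Ka n m mn.
apply: hyp_bound => //.
- by rewrite ltcR; lra.
- move=> i; rewrite -addrA; apply: le_trans (ler_normD _ _) _.
  rewrite normr1 -addrA lerD2l; apply: le_trans (ler_normD _ _) _.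
  by rewrite normr_nat.
have ni : `|'i : R[i]| = 1.
  by rewrite normc_def /= expr0n add0r expr1n sqrtr1.
have nw : `|'i * a / n%:R| = `|a| / n%:R.
  by rewrite normf_div normrM ni mul1r normr_nat.
have hw : `|'i * a / n%:R| <= B%:C.
  rewrite nw; apply: le_trans (hB _ Ka).
  case: n {mn nw} => [|n]; first by rewrite invr0 mulr0.
  by apply: ler_piMr => //; rewrite invf_le1 // ?ler1n ?ltr0n.
apply: le_trans (@cexp_bound _ _ _ B0 hw) _.
rewrite nw mulrA; apply: ler_wpM2r; first by rewrite invr_ge0 ler0n.
rewrite rmorphD rmorphM /= rmorph1.
apply: le_trans (ler_wpM2l _ (hB _ Ka)) _.
  by rewrite -rmorphM ler0c mulr_ge0 // ltW.
by rewrite -!rmorphM lerDl ler01.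
Qed.
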